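(* Let $k\ge 2$ and let $\mathcal H$ be a 3-uniform linear hypergraph containing no Berge cycle of length $2k+1$. Let $\pi$ be a choice function on $\mathcal H$ and let $G_\pi$ be the graph with edge set $\{\pi(E): E\in\mathcal H,\ \pi(E)\ne\emptyset\}$. Let $T$ be a subtree (not necessarily spanning) of $G_\pi$, let $x\in V(T)$, and for $i\ge 0$ let $V_i$ be the set of vertices of $T$ at distance exactly $i$ from $x$ in $T$. Then for every $1\le i\le k$, the induced subgraph $G_\pi[V_i]$ contains no $\Theta$-graph of order $\ell$ for any $\ell\ge 2k$.
   Context: A hypergraph is linear if any two distinct hyperedges share at most one vertex. A Berge cycle of length $m$ is a family of $m$ distinct hyperedges $H_0,\dots,H_{m-1}$ for which there exist distinct vertices $v_0,\dots,v_{m-1}$ with $\{v_i,v_{i+1}\}\subset H_i$ (indices mod $m$). A choice function on $\mathcal H$ is a map $\pi$ assigning to each hyperedge $E$ either a 2-element subset $\pi(E)\subset E$ or $\emptyset$. A $\Theta$-graph of order $\ell$ ($\ell\ge4$) is a cycle of length $\ell$ together with one chord, on exactly $\ell$ vertices. *)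

(* Defs.v *)
From mathcomp Require Import all_boot.
Set Implicit Arguments. Unset Strict Implicit. Unset Printing Implicit Defensive.

Section Defs.
Variable V : finType.

Definition uniform3 (H : {set {set V}}) : Prop :=
  forall E, E \in H -> #|E| = 3.

Definition linear_hg (H : {set {set V}}) : Prop :=
  forall E F, E \in H -> F \in H -> E != F -> #|E :&: F| <= 1.

Definition berge_cycle (H : {set {set V}}) (m : nat) : Prop :=
  exists (e : nat -> {set V}) (v : nat -> V),
    [/\ forall i, i < m -> e i \in H,
        forall i j, i < m -> j < m -> e i = e j -> i = j,
        forall i j, i < m -> j < m -> v i = v j -> i = j &
        forall i, i < m -> (v i \in e i) && (v ((i + 1) %% m) \in e i)].

Definition choice_fun (H : {set {set V}}) (pi : {set V} -> {set V}) : Prop :=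
  forall E, E \in H -> (pi E \subset E) && ((#|pi E| == 2) || (pi E == set0)).

Definition Gpi (H : {set {set V}}) (pi : {set V} -> {set V}) : rel V :=
  fun u w => [exists E in H, pi E == [set u; w]] && (u != w).

Definition subtree (G : rel V) (S : {set V}) (t : rel V) : Prop :=
  [/\ forall u w, t u w -> (u \in S) && (w \in S),
      (forall u w, t u w = t w u) /\ (forall u, ~~ t u u),
      forall u w, t u w -> G u w,
      forall u w, u \in S -> w \in S -> connect t u w &
      forall c : seq V, uniq c -> 2 < size c -> ~~ cycle t c].

Definition dist_is (t : rel V) (x y : V) (d : nat) : Prop :=
  (exists p : seq V, [/\ path t x p, last x p = y & size p = d]) /\
  (forall p : seq V, path t x p -> last x p = y -> d <= size p).

Definition layer (S : {set V}) (t : rel V) (x : V) (i : nat) (y : V) : Prop :=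
  y \in S /\ dist_is t x y i.

Definition has_theta (G : rel V) (A : V -> Prop) (l : nat) : Prop :=
  exists w : nat -> V,
    [/\ forall i, i < l -> A (w i),
        forall i j, i < l -> j < l -> w i = w j -> i = j,
        forall i, i < l -> G (w i) (w ((i + 1) %% l)) &
        exists a b, [/\ a < l, b < l, a != b,
                        (b != (a + 1) %% l) && (a != (b + 1) %% l) &
                        G (w a) (w b)]].
End Defs.

(* Main.v *)
Require Import Defs.
From mathcomp Require Import all_boot.
From mathcomp Require Import zify.
From Stdlib Require Import Classical ClassicalEpsilon.
Set Implicit Arguments. Unset Strict Implicit.

Section Core.
Variable T : Type.

Lemma perk (F : nat -> T) P : (forall p, F (p + P) = F p) -> forall k p, F (p + k * P) = F p.
Proof. move=> H; elim=> [|k IH] p; first by rewrite mul0n addn0.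
rewrite mulSn addnA (IH (p+P)) H. done. Qed.

Lemma Qperk (Q : nat -> Prop) P : (forall p, Q p <-> Q (p + P)) -> forall k p, Q p <-> Q (p + k * P).
Proof. move=> H; elim=> [|k IH] p; first by rewrite mul0n addn0.
rewrite (IH p) (H (p + k * P)). have -> : p + k * P + P = p + k.+1 * P by rewrite mulSn; lia. done. Qed.

Lemma cover (Q : nat -> Prop) P m : 0 < P -> (forall p, Q p <-> Q (p + P)) ->
  (forall j, j < P -> Q (m + j)) -> forall p, Q p.
Proof. move=> P0 HP Hm p.
apply/(Qperk HP m p).
have -> : p + m * P = m + (p + m * P - m) %% P + ((p + m * P - m) %/ P) * P.
  have := divn_eq (p + m * P - m) P. have : m <= m * P by rewrite leq_pmulr. lia.
apply/(Qperk HP ((p + m * P - m) %/ P) (m + (p + m * P - m) %% P)). apply: Hm. by rewrite ltn_mod.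
Qed.

Lemma const2 (F : nat -> T) L : odd L -> (forall p, F (p + 2) = F p) -> (forall p, F (p + L) = F p) ->
  forall p, F p = F 0.
Proof. move=> oL H2 HL.
have H1 : forall p, F (p + 1) = F p.
  move=> p. rewrite -(HL p). have := perk H2 (L./2) (p + 1).
  have -> : p + 1 + L./2 * 2 = p + L. have := odd_double_half L. rewrite oL /=. lia.
  done.
elim=> [|p IH] //. by rewrite -addn1 H1.
Qed.

Variables (F : nat -> T) (l L d : nat).
Hypotheses (oL : odd L) (L0 : 0 < L) (Ll : L < l) (d2 : 2 <= d) (dl : d + 2 <= l).
Hypotheses (perl : forall p, F (p + l) = F p) (perL : forall p, F (p + L) = F p).
Let perM : forall p, F (p + (l - L)) = F p.
Proof. move=> p. rewrite -perL -(perl p). congr F; lia. Qed.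

Definition OOh := forall r s, r + s = L.-1 -> r + s <= l - d - 1 -> F (l - r) = F (d + s).
Definition IIh := forall r s, r + s = L.-1 -> r + s <= d - 1 -> F r = F (d - s).
Definition OIh := forall r s, r + s = L.-1 -> r <= l - d - 1 -> s <= d - 1 -> F (l - r) = F (d - s).
Definition IOh := forall r s, r + s = L.-1 -> r <= d - 1 -> s <= l - d - 1 -> F r = F (d + s).

Lemma Q1all : OOh -> L <= l - d -> forall p, F p = F (p + (d - 1)).
Proof. move=> OO Hl.
apply: (@cover (fun p => F p = F (p + (d - 1))) L (l - L + 1)) => //.
  move=> p; split=> E. by rewrite perL (addnAC p L) perL.
  by rewrite -perL E (addnAC p L) perL.
move=> j jL. have -> : l - L + 1 + j = l - (L - 1 - j) by lia.
rewrite (OO (L - 1 - j) j); try lia.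
rewrite -perM. congr F; lia.
Qed.

Lemma Q2all : IIh -> L <= d -> forall p, F p = F (p + (d + 1)).
Proof. move=> II Hl.
apply: (@cover (fun p => F p = F (p + (d + 1))) L 0) => //.
  move=> p; split=> E. by rewrite perL (addnAC p L) perL.
  by rewrite -perL E (addnAC p L) perL.
move=> j jL. rewrite (II j (L - 1 - j)); try lia.
rewrite -perL. congr F; lia.
Qed.

Lemma half : OOh -> IIh -> OIh -> IOh -> L <= l - d -> forall p, F p = F 0.
Proof. move=> OO II OI IO Hl.
have Q1 := Q1all OO Hl.
apply: (const2 oL) => //.
case: (leqP L d) => Ld.
  have Q2 := Q2all II Ld.
  move=> p. rewrite (Q1 (p + 2)) (Q2 p). congr F; lia.
have R0 : forall r, r <= d - 1 -> F r = F (l - r).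
  move=> r rd. rewrite (IO r (L - 1 - r)); try lia.
  rewrite (Q1 (l - r)) -(perM (d + (L - 1 - r))). congr F; lia.
have R1 : forall e, e <= d - 1 -> F (1 + e) = F (l + 1 - e).
  move=> e ed. rewrite -perM.
  have -> : 1 + e + (l - L) = l - (L - 1 - e) by lia.
  rewrite (OI (L - 1 - e) e); try lia.
  rewrite (Q1 (l + 1 - e)) -(perl (d - e)). congr F; lia.
have Q3 : forall x, x < d - 1 -> F (x + 2) = F x.
  move=> x xd. have -> : x + 2 = 1 + (x + 1) by lia.
  rewrite R1; last lia. rewrite (R0 x); last lia. congr F; lia.
apply: (@cover (fun p => F (p + 2) = F p) (d - 1) 0); first lia.
  move=> p; split=> E. by rewrite (addnAC p _ 2) -(Q1 (p + 2)) -(Q1 p).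
  by rewrite (Q1 (p + 2)) (Q1 p) (addnAC p 2).
move=> j jd. exact: Q3.
Qed.

Lemma case3 : OIh -> IOh -> d < L -> l - d < L -> forall p, F p = F 0.
Proof. move=> OI IO H1 H2.
apply: (const2 oL) => //.
have R1 : forall z, z <= l - L - 1 -> F (d + 1 + z) = F (l - L - z).
  move=> z zM. have -> : d + 1 + z = l - (l - d - 1 - z) by lia.
  rewrite (OI (l - d - 1 - z) (L - 1 - (l - d - 1 - z))); try lia.
  congr F; lia.
have R2 : forall z, z <= l - L - 1 -> F (d - 1 - z) = F z.
  move=> z zM. rewrite (IO (d - 1 - z) (L - 1 - (d - 1 - z))); try lia.
  rewrite -(perL z); congr F; lia.
apply: (@cover (fun p => F (p + 2) = F p) (l - L) (d - 1)); first lia.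
  move=> p; split=> E. by rewrite (addnAC p _ 2) !perM.
  by rewrite -perM (addnAC p 2) E perM.
move=> z zM. have -> : d - 1 + z + 2 = d + 1 + z by lia.
rewrite R1; last lia.
case: z zM => [|z] zM.
  rewrite subn0 addn0. have E1 := perM 0. rewrite add0n in E1. rewrite E1.
  have E2 := R2 0. rewrite subn0 in E2. rewrite E2 //; lia.
rewrite -(R2 (l - L - z.+1)); last lia. rewrite -(perM (d - 1 - (l - L - z.+1))). congr F; lia.
Qed.
End Core.

Lemma core_all (T : Type) (F : nat -> T) (l L d : nat) :
  odd L -> 0 < L -> L < l -> 2 <= d -> d + 2 <= l ->
  (forall p, F (p + l) = F p) -> (forall p, F (p + L) = F p) ->
  OOh F l L d -> IIh F L d -> OIh F l L d -> IOh F l L d -> forall p, F p = F 0.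
Proof.
move=> oL L0 Ll d2 dl perl perL OO II OI IO.
case: (leqP L (l - d)) => H1; first exact: (half oL L0 Ll d2 dl perl perL OO II OI IO H1).
case: (leqP L d) => H2; last exact: (case3 oL L0 Ll d2 dl perl perL OI IO H2 H1).
pose G y := F (d + y).
have HG : forall p, G p = G 0.
  apply: (@half T G l L (l - d) oL L0 Ll); try lia.
  - by move=> p; rewrite /G addnA perl.
  - by move=> p; rewrite /G addnA perL.
  - move=> r s E C. rewrite /G.
    have -> : d + (l - r) = d - r + l by lia. rewrite perl.
    have -> : d + (l - d + s) = s + l by lia. rewrite perl.
    rewrite (II s r) //; lia.
  - move=> r s E C. rewrite /G.
    have -> : d + (l - d - s) = l - s by lia. rewrite (OO s r) //; lia.
  - move=> r s E C1 C2. rewrite /G.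
    have -> : d + (l - r) = d - r + l by lia. rewrite perl.
    rewrite -(OI s r); try lia. congr F; lia.
  - move=> r s E C1 C2. rewrite /G.
    have -> : d + (l - d + s) = s + l by lia. rewrite perl.
    rewrite (IO s r) //; lia.
move=> p. have E1 := HG (p + l - d). rewrite /G addn0 in E1.
have E2 := HG (l - d). rewrite /G addn0 in E2.
have -> : p = p + l - d + d - l by lia.
rewrite -(perl (p + l - d + d - l)).
have -> : p + l - d + d - l + l = d + (p + l - d) by lia.
rewrite E1 -E2. have -> : d + (l - d) = 0 + l by lia. by rewrite perl.
Qed.

Section Tree.
Variables (V : finType) (t : rel V) (x : V).

Lemma dist_uniq y n m : dist_is t x y n -> dist_is t x y m -> n = m.
Proof.
case=> [[p [p1 p2 p3]] Hn] [[q [q1 q2 q3]] Hm].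
have := Hn q q1 q2. have := Hm p p1 p2. lia.
Qed.

Lemma dist0 y : dist_is t x y 0 -> y = x.
Proof. case=> [[p [p1 p2 p3]] _]. by case: p p1 p2 p3. Qed.

Lemma dist_step y n : dist_is t x y n.+1 -> exists z, t z y /\ dist_is t x z n.
Proof.
case=> [[p [p1 p2 p3]] Hn].
case/lastP: p p1 p2 p3 => [//|q z]. rewrite rcons_path last_rcons size_rcons => /andP[pq tz] zy [sq].
subst z. exists (last x q). split => //. split.
  by exists q.
move=> p' pp' lp'. have := Hn (rcons p' y). rewrite rcons_path pp' lp' tz last_rcons size_rcons.
move=> H. have := H erefl erefl. lia.
Qed.

Definition par (y : V) : V :=
  epsilon (inhabits y) (fun z => exists n, dist_is t x y n.+1 /\ t z y /\ dist_is t x z n).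

Lemma par_spec y n : dist_is t x y n.+1 -> t (par y) y /\ dist_is t x (par y) n.
Proof.
move=> Hy. have [z [tz dz]] := dist_step Hy.
have : exists z, exists n, dist_is t x y n.+1 /\ t z y /\ dist_is t x z n.
  by exists z, n.
move/(epsilon_spec (inhabits y)). rewrite -/(par y).
case=> n' [Hy' [tp dp]]. have E := dist_uniq Hy Hy'. case: E => E. subst n'. by [].
Qed.

Definition anc (n : nat) (y : V) : V := iter n par y.

Lemma anc_add k m y : anc (k + m) y = anc k (anc m y).
Proof. by rewrite /anc iterD. Qed.

Lemma anc_dist y i h : dist_is t x y i -> h <= i -> dist_is t x (anc h y) (i - h).
Proof.
move=> Hy; elim: h => [|h IH] hi; first by rewrite subn0.
have := IH (ltnW hi). have -> : i - h = (i - h.+1).+1 by lia.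
by case/par_spec.
Qed.

Lemma anc_edge y i h : dist_is t x y i -> h < i -> t (anc h.+1 y) (anc h y).
Proof.
move=> Hy hi. have := anc_dist Hy (ltnW hi). have -> : i - h = (i - h.+1).+1 by lia.
by case/par_spec.
Qed.
End Tree.

Lemma succ_mod n m : n < m -> (n + 1) %% m = if n.+1 == m then 0 else n.+1.
Proof.
move=> nm. case: eqP => E. by rewrite addn1 E modnn.
rewrite modn_small; lia.
Qed.

Lemma Gpi_sym (V : finType) (H : {set {set V}}) pi u w : Gpi H pi u w = Gpi H pi w u.
Proof. by rewrite /Gpi setUC eq_sym. Qed.

Lemma cycle_to_berge (V : finType) (H : {set {set V}}) pi (m : nat) (v : nat -> V) :
  choice_fun H pi -> 2 < m ->
  (forall n n', n < m -> n' < m -> v n = v n' -> n = n') ->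
  (forall n, n < m -> Gpi H pi (v n) (v ((n + 1) %% m))) ->
  berge_cycle H m.
Proof.
move=> cf m3 vinj adj.
pose e n := odflt set0 [pick E in H | pi E == [set v n; v ((n + 1) %% m)]].
have eP : forall n, n < m -> e n \in H /\ pi (e n) = [set v n; v ((n + 1) %% m)].
  move=> n nm. have := adj n nm. rewrite /Gpi => /andP[/existsP[E /andP[EH /eqP PE]] _].
  rewrite /e. case: pickP => [F /andP[FH /eqP PF]|/(_ E)] /=; first by [].
  by rewrite EH PE eqxx.
exists e, v. split.
- by move=> n nm; case: (eP n nm).
- move=> n n' nm n'm E.
  have [_ P1] := eP n nm. have [_ P2] := eP n' n'm.
  rewrite E P2 in P1.
  have h1 : v n \in [set v n'; v ((n' + 1) %% m)] by rewrite P1 set21.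
  have h2 : v n' \in [set v n; v ((n + 1) %% m)] by rewrite -P1 set21.
  have ltm : forall j, j < m -> (j + 1) %% m < m by move=> j _; rewrite ltn_mod; lia.
  move: h1 h2; rewrite !inE => /orP[/eqP/vinj|/eqP/vinj] h1 /orP[/eqP/vinj|/eqP/vinj] h2.
  + exact: h1.
  + exact: h1.
  + by rewrite (h2 n'm nm).
  + have := h1 nm (ltm _ n'm). have := h2 n'm (ltm _ nm).
    rewrite (succ_mod nm) (succ_mod n'm).
    case: eqP; case: eqP; lia.
- exact: vinj.
- move=> n nm. have [_ P] := eP n nm.
  have := cf _ (proj1 (eP n nm)) => /andP[/subsetP S _].
  by rewrite !S // P !inE eqxx ?orbT.
Qed.

Lemma build (V : finType) (H : {set {set V}}) pi (t : rel V) (x : V) (q : nat -> V) (L J i : nat) :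
  choice_fun H pi -> (forall u w, t u w -> Gpi H pi u w) ->
  0 < J -> J <= i ->
  (forall n, n <= L -> dist_is t x (q n) i) ->
  (forall n n', n <= L -> n' <= L -> q n = q n' -> n = n') ->
  (forall n, n < L -> Gpi H pi (q n) (q n.+1)) ->
  anc t x J (q 0) = anc t x J (q L) ->
  anc t x J.-1 (q 0) <> anc t x J.-1 (q L) ->
  berge_cycle H (L + 2 * J).
Proof.
move=> cf tG J0 Ji qd qinj qadj eJ nJ.
have L0 : 0 < L. case: (posnP L) => // L0'. by rewrite L0' in nJ.
pose cyc n := if n <= L then q n else if n <= L + J then anc t x (n - L) (q L)
              else anc t x (L + 2 * J - n) (q 0).
pose h n := if n <= L then 0 else if n <= L + J then n - L else L + 2 * J - n.
have hd : forall n, n < L + 2 * J -> dist_is t x (cyc n) (i - h n).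
  move=> n nm. rewrite /cyc /h. case: ifP => nL; first by rewrite subn0; apply: qd.
  case: ifP => nLJ; apply: anc_dist; try lia; apply: qd; lia.
have hJ : forall n, n < L + 2 * J -> h n <= J by move=> n nm; rewrite /h; case: ifP => ?; [lia | case: ifP => ?; lia].
have ancJ1 : forall hh, hh < J -> anc t x hh (q 0) = anc t x hh (q L) -> False.
  move=> hh hh1 E. apply: nJ. have -> : J.-1 = (J.-1 - hh) + hh by lia.
  by rewrite !anc_add E.
apply: (cycle_to_berge (m := L + 2 * J) (v := cyc) cf); first lia.
- have cA : forall n, n <= L -> cyc n = q n /\ h n = 0.
    by move=> n nL; rewrite /cyc /h !ifT.
  have cB : forall n, L < n <= L + J -> cyc n = anc t x (n - L) (q L) /\ h n = n - L.
    move=> n nL. have b1 : (n <= L) = false by lia. have b2 : (n <= L + J) = true by lia.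
    by rewrite /cyc /h b1 b2.
  have cC : forall n, L + J < n -> cyc n = anc t x (L + 2 * J - n) (q 0) /\ h n = L + 2 * J - n.
    move=> n nL. have b1 : (n <= L) = false by lia. have b2 : (n <= L + J) = false by lia.
    by rewrite /cyc /h b1 b2.
  move=> n n' nm n'm E.
  have E1 := hd n nm. rewrite E in E1. have E2 := dist_uniq E1 (hd n' n'm).
  have Eh : h n = h n' by have := hJ n nm; have := hJ n' n'm; lia.
  have : n <= L \/ L < n <= L + J \/ L + J < n by lia.
  have : n' <= L \/ L < n' <= L + J \/ L + J < n' by lia.
  case=> [H1|[H1|H1]]; case=> [H2|[H2|H2]].
  all: try (move: (cA _ H1) => [c1 h1]); try (move: (cB _ H1) => [c1 h1]); try (move: (cC _ H1) => [c1 h1]).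
  all: try (move: (cA _ H2) => [c2 h2]); try (move: (cB _ H2) => [c2 h2]); try (move: (cC _ H2) => [c2 h2]).
  all: (try rewrite c1 in E); (try rewrite c2 in E); (try rewrite h1 in Eh); (try rewrite h2 in Eh); try lia.
  + by apply: qinj.
  all: try (exfalso; apply: (ancJ1 (n' - L)); [lia | by rewrite -{1}Eh E]).
  all: try (exfalso; apply: (ancJ1 (n - L)); [lia | by rewrite {1}Eh -E]).

- move=> n nm. rewrite (succ_mod nm).
  case: (ltnP n L) => nL.
    have -> : (n.+1 == L + 2 * J) = false by apply/eqP; lia.
    rewrite /cyc. rewrite ifT; last lia. rewrite ifT; last lia. exact: qadj.
  case: (ltnP n (L + J)) => nLJ.
    have -> : (n.+1 == L + 2 * J) = false by apply/eqP; lia.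
    have c1 : cyc n = anc t x (n - L) (q L).
      rewrite /cyc. case: ifP => H1; last by rewrite ifT //; lia.
      have -> : n = L by lia. by rewrite subnn.
    have c2 : cyc n.+1 = anc t x (n - L).+1 (q L).
      rewrite /cyc ifF; last lia. rewrite ifT; last lia. congr anc; lia.
    rewrite c1 c2 Gpi_sym. apply: tG. apply: (anc_edge (i := i)); [apply: qd; lia | lia].
  have c1 : cyc n = anc t x (L + 2 * J - n - 1).+1 (q 0).
    rewrite /cyc ifF; last lia. case: ifP => H1.
      have -> : n = L + J by lia. have -> : L + J - L = J by lia. rewrite -eJ. congr anc; lia.
    congr anc; lia.
  have c2 : cyc (if n.+1 == L + 2 * J then 0 else n.+1) = anc t x (L + 2 * J - n - 1) (q 0).
    case: eqP => E.
      have -> : L + 2 * J - n - 1 = 0 by lia. by rewrite /cyc /=.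
    rewrite /cyc ifF; last lia. rewrite ifF; last lia. congr anc; lia.
  rewrite c1 c2. apply: tG. apply: (anc_edge (i := i)); [apply: qd; lia | lia].
Qed.

Ltac solve_if := rewrite ?leq0n; repeat (case: ifP => ?); lia.

Definition NCP (T : Type) (F : nat -> T) (l L d : nat) :=
  forall o : nat -> nat,
    (forall n m, n <= L -> m <= L -> o n = o m -> n = m) ->
    (forall n m, n <= L -> m <= L -> o n < o m + l) ->
    (forall n, n < L -> o n.+1 = o n + 1 \/ o n = o n.+1 + 1 \/ ((o n = 0 \/ o n = l) /\ o n.+1 = d)) ->
    F (o 0) = F (o L).

Section Fam.
Variables (T : Type) (F : nat -> T) (l L d : nat).
Hypothesis NC : NCP F l L d.
Hypotheses (Ll : L < l) (L0 : 0 < L) (d2 : 2 <= d) (dl : d + 2 <= l).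

Lemma fam_cyc p : F (p + L) = F p.
Proof.
symmetry. have := NC (o := fun n => p + n). rewrite /= addn0. apply; try lia.
Qed.

Lemma fam_OO : OOh F l L d.
Proof.
move=> r s E C. pose o n := if n <= r then l - r + n else d + (n - r - 1).
have e0 : o 0 = l - r by rewrite /o; solve_if.
have eL : o L = d + s by rewrite /o; solve_if.
rewrite -e0 -eL. apply: NC; rewrite /o; [move=> n m ? ?|move=> n m ? ?|move=> n ?]; solve_if.
Qed.

Lemma fam_II : IIh F L d.
Proof.
move=> r s E C. pose o n := if n <= r then r - n else d - (n - r - 1).
have e0 : o 0 = r by rewrite /o; solve_if.
have eL : o L = d - s by rewrite /o; solve_if.
rewrite -{1}e0 -eL. apply: NC; rewrite /o; [move=> n m ? ?|move=> n m ? ?|move=> n ?]; solve_if.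
Qed.

Lemma fam_OI : OIh F l L d.
Proof.
move=> r s E C1 C2. pose o n := if n <= r then l - r + n else d - (n - r - 1).
have e0 : o 0 = l - r by rewrite /o; solve_if.
have eL : o L = d - s by rewrite /o; solve_if.
rewrite -e0 -eL. apply: NC; rewrite /o; [move=> n m ? ?|move=> n m ? ?|move=> n ?]; solve_if.
Qed.

Lemma fam_IO : IOh F l L d.
Proof.
move=> r s E C1 C2. pose o n := if n <= r then r - n else d + (n - r - 1).
have e0 : o 0 = r by rewrite /o; solve_if.
have eL : o L = d + s by rewrite /o; solve_if.
rewrite -{1}e0 -eL. apply: NC; rewrite /o; [move=> n m ? ?|move=> n m ? ?|move=> n ?]; solve_if.
Qed.
End Fam.

Lemma find_first (P : nat -> Prop) i : ~ P 0 -> P i -> exists J, [/\ 0 < J, J <= i, P J & ~ P J.-1].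
Proof.
move=> P0; elim: i => [|i IH] Pi; first by [].
case: (classic (P i)) => Hi.
  have [J [J0 Ji PJ nPJ]] := IH Hi. exists J; split => //; lia.
by exists i.+1.
Qed.

Lemma mod_inj (a l x y : nat) : x < y -> y < x + l -> (a + x) %% l <> (a + y) %% l.
Proof.
move=> xy yl /eqP. have -> : a + y = (a + x) + (y - x) by lia.
rewrite -{1}(addn0 (a + x)) eqn_modDl mod0n => /eqP/esym/eqP.
rewrite -/(dvdn l (y - x)) => /dvdn_leq. lia.
Qed.

Lemma theta_step (V : finType) (G : rel V) (w : nat -> V) (l a b d : nat) (o : nat -> nat) n :
  a < l -> (a + d) %% l = b -> (forall u v, G u v = G v u) ->
  (forall j, j < l -> G (w j) (w ((j + 1) %% l))) -> G (w a) (w b) ->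
  (o n.+1 = o n + 1 \/ o n = o n.+1 + 1 \/ ((o n = 0 \/ o n = l) /\ o n.+1 = d)) ->
  G (w ((a + o n) %% l)) (w ((a + o n.+1) %% l)).
Proof.
move=> al ad Gs wadj Gab [E|[E|[E1 E2]]].
- rewrite E addnA -(modnDml (a + o n) 1). apply: wadj. rewrite ltn_mod; lia.
- rewrite E Gs addnA -(modnDml (a + o n.+1) 1). apply: wadj. rewrite ltn_mod; lia.
- rewrite E2 ad. case: E1 => ->; first by rewrite addn0 modn_small.
  by rewrite modnDr modn_small.
Qed.


Unset Implicit Arguments.

Theorem lemma5p2 (V : finType) (k : nat) (H : {set {set V}})
    (pi : {set V} -> {set V}) (S : {set V}) (t : rel V) (x : V) :
  2 <= k ->
  uniform3 H -> linear_hg H -> ~ berge_cycle H (2 * k + 1) ->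
  choice_fun H pi ->
  subtree (Gpi H pi) S t -> x \in S ->
  forall i l, 1 <= i <= k -> 2 * k <= l ->
    ~ has_theta (Gpi H pi) (layer S t x i) l.
Proof.
move=> k2 _ _ nob cf [_ _ tG _ _] _ i l /andP[i1 ik] kl.
move=> [w [wA winj wadj [a [b [al bl ab /andP[nb1 na1] Gab]]]]].
have wd : forall j, j < l -> dist_is t x (w j) i by move=> j jl; case: (wA j jl).
have Gs : forall u v, Gpi H pi u v = Gpi H pi v u by move=> u v; exact: Gpi_sym.
pose all_same s := forall j, j < l -> anc t x s (w j) = anc t x s (w 0).
have asi : all_same i.
  move=> j jl. have h1 := anc_dist (wd j jl) (leqnn i). have h2 := anc_dist (wd 0 ltac:(lia)) (leqnn i).
  rewrite subnn in h1 h2. by rewrite (dist0 h1) (dist0 h2).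
have as0 : ~ all_same 0.
  move=> A. have := A 1 ltac:(lia). move/(winj 1 0); lia.
have [J [J0 Ji AJ nAJ]] := find_first as0 asi.
pose L := 2 * k + 1 - 2 * J.
pose d := if a < b then b - a else b + l - a.
have [ad d2 dl] : [/\ (a + d) %% l = b, 2 <= d & d + 2 <= l].
  have sm : forall c, c < l -> (c + 1) %% l = if c.+1 < l then c.+1 else 0.
    move=> c cl. case: ltnP => h. rewrite modn_small; lia. have -> : c + 1 = l by lia. by rewrite modnn.
  move: nb1 na1 ab => /eqP nb /eqP na /eqP nab.
  rewrite (sm a al) in nb. rewrite (sm b bl) in na.
  rewrite /d. move: nb na. case: ifP => ?; case: ifP => ? nb na;
  (case: ltnP => ab'; [rewrite modn_small; [split; lia| lia] |
     have -> : a + (b + l - a) = b + l by lia]; rewrite modnDr modn_small; [split; lia | lia]).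
pose F p := anc t x J.-1 (w ((a + p) %% l)).
have NC : NCP F l L d.
  move=> o oinj ospr ostep.
  case: (eqVneq (F (o 0)) (F (o L))) => // nF. exfalso. apply: nob.
  have -> : 2 * k + 1 = L + 2 * J by rewrite /L; lia.
  have posl : forall n, (a + o n) %% l < l by move=> n; rewrite ltn_mod; lia.
  apply: (@build V H pi t x (fun n => w ((a + o n) %% l)) L J i) => //.
  - move=> n nL. exact: wd.
  - move=> n m nL mL /(winj _ _ (posl n) (posl m)) E.
    case: (ltngtP (o n) (o m)) => c.
    + exfalso. exact: (mod_inj c (ospr _ _ mL nL) E).
    + exfalso. exact: (mod_inj c (ospr _ _ nL mL) (esym E)).
    + exact: oinj.
  - move=> n nL. exact: (@theta_step V (Gpi H pi) w l a b d o n al ad Gs wadj Gab (ostep n nL)).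
  - by rewrite (AJ _ (posl 0)) (AJ _ (posl L)).
  - by move/eqP: nF.
have Lodd : odd L.
  rewrite /L. have -> : 2 * k + 1 - 2 * J = (k - J).*2.+1 by lia.
  by rewrite /= odd_double.
have perl : forall p, F (p + l) = F p by move=> p; rewrite /F addnA modnDr.
have L0 : 0 < L by rewrite /L; lia.
have Ll : L < l by rewrite /L; lia.
have perL := fam_cyc NC Ll L0 d2 dl.
have Fc := core_all Lodd L0 Ll d2 dl perl perL (fam_OO NC Ll L0 d2 dl) (fam_II NC Ll L0 d2 dl) (fam_OI NC Ll L0 d2 dl) (fam_IO NC Ll L0 d2 dl).
apply: nAJ. move=> j jl.
have h1 := Fc (j + l - a). have h2 := Fc (l - a).
rewrite /F in h1 h2.
have e1 : (a + (j + l - a)) %% l = j.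
  have -> : a + (j + l - a) = j + l by clear -al; lia. by rewrite modnDr modn_small.
have e2 : (a + (l - a)) %% l = 0.
  have -> : a + (l - a) = l by clear -al; lia. by rewrite modnn.
rewrite e1 in h1. rewrite e2 in h2. by rewrite h1 h2.
Qed.
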